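(* In any pasting scheme, the reflexive and transitive closure of the relation ''$\alpha$ lies directly above $\beta$'' on the set of atomic 2-cells is antisymmetric, and hence is a partial order.
   Context: A plane graph is a finite connected directed graph with an embedding in the plane $\mathbb C$. Its faces are the closures of the connected components of the complement; the unbounded one is the exterior face, the others interior faces. Each edge has a face on its left and one on its right. The exterior face is anchorable if the set of edges having the exterior face on their left and the set having it on their right each form a nonempty directed path from a vertex $s_{\mathcal P}$ to a vertex $t_{\mathcal P}$ (these are $\mathrm{dom}_{\mathcal P}$, $\mathrm{cod}_{\mathcal P}$). An interior face $F$ is anchorable if the set of edges having $F$ on their right and the set having $F$ on their left each form a nonempty directed path from $s_F$ to $t_F$, with no common edges and no common vertices other than $s_F,t_F$ (these are $\mathrm{dom}_F$, $\mathrm{cod}_F$). A pasting scheme is a finite connected plane graph all of whose faces are anchorable, with $s_{\mathcal P}$ the only vertex with no incoming edges and $t_{\mathcal P}$ the only vertex with no outgoing edges. Interior faces are atomic 2-cells. An atomic 2-cell $\alpha$ lies directly above an atomic 2-cell $\beta$ if there is an edge belonging to both $\mathrm{cod}_\alpha$ and $\mathrm{dom}_\beta$. *)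

(* Defs.v *)
(* Plane graphs are represented combinatorially by a
   rotation system (combinatorial map) of genus 0 with a chosen outer face. *)
From mathcomp Require Import all_boot.
From mathcomp Require Import fingroup perm.

Set Implicit Arguments.
Unset Strict Implicit.
Unset Printing Implicit Defensive.

Section PlaneGraph.
Variables (V E : finType) (src tgt : E -> V).

(* A dart is an edge together with an orientation: (e, true) runs along e
   from src e to tgt e, (e, false) runs against it. *)
Definition dart := (E * bool)%type.

Definition dtail (d : dart) : V := if d.2 then src d.1 else tgt d.1.
Definition dflip (d : dart) : dart := (d.1, ~~ d.2).

(* sigma d = the next dart clockwise around the tail vertex of d;
   sigma is a single cycle on the darts at each vertex. *)
Definition rotation_system (sigma : {perm dart}) : Prop :=
  (forall d, dtail (sigma d) = dtail d) /\
  (forall d d', dtail d = dtail d' -> fconnect sigma d d').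

(* Face permutation: following the boundary of the face on the left of d. *)
Definition facep (sigma : {perm dart}) (d : dart) : dart := sigma (dflip d).

Definition face_of (sigma : {perm dart}) (d : dart) : {set dart} :=
  [set d' | fconnect (facep sigma) d d'].

Definition faces (sigma : {perm dart}) : {set {set dart}} :=
  [set face_of sigma d | d : dart].

Definition adjacent : rel V :=
  [rel u v | [exists e, ((src e == u) && (tgt e == v)) ||
                        ((src e == v) && (tgt e == u))]].

Definition graph_connected : Prop := forall u v : V, connect adjacent u v.

(* Euler's formula for a connected map: genus 0, i.e. a plane embedding. *)
Definition planar_map (sigma : {perm dart}) : Prop :=
  #|V| + #|faces sigma| = #|E| + 2.

Definition plane_graph (sigma : {perm dart}) (ext : {set dart}) : Prop :=
  [/\ rotation_system sigma, graph_connected, planar_map sigma &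
      ext \in faces sigma].

Definition left_edges (F : {set dart}) : {set E} := [set e | (e, true) \in F].
Definition right_edges (F : {set dart}) : {set E} := [set e | (e, false) \in F].

Definition dpath (s t : V) (p : seq E) : bool :=
  if p is e0 :: p' then
    [&& src e0 == s, path (fun e f => tgt e == src f) e0 p',
        tgt (last e0 p') == t & uniq (s :: map tgt p)]
  else false.

Definition forms_path (A : {set E}) (s t : V) : Prop :=
  exists p : seq E, dpath s t p /\ (forall e, (e \in A) = (e \in p)).

Definition vertices_of (A : {set E}) : {set V} :=
  [set v | [exists e in A, (src e == v) || (tgt e == v)]].

Definition anchorable_exterior (ext : {set dart}) (sP tP : V) : Prop :=
  forms_path (left_edges ext) sP tP /\ forms_path (right_edges ext) sP tP.

Definition anchorable_interior (F : {set dart}) : Prop :=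
  exists sF tF : V,
    [/\ forms_path (right_edges F) sF tF, forms_path (left_edges F) sF tF,
        right_edges F :&: left_edges F = set0 &
        vertices_of (right_edges F) :&: vertices_of (left_edges F)
          \subset [set sF; tF]].

Definition atomic_cells (sigma : {perm dart}) (ext : {set dart})
  : {set {set dart}} := faces sigma :\ ext.

Definition pasting_scheme (sigma : {perm dart}) (ext : {set dart}) : Prop :=
  plane_graph sigma ext /\
  exists sP tP : V,
    [/\ anchorable_exterior ext sP tP,
        (forall F, F \in atomic_cells sigma ext -> anchorable_interior F),
        (forall v, (forall e, tgt e != v) <-> v = sP) &
        (forall v, (forall e, src e != v) <-> v = tP)].

(* alpha lies directly above beta: some edge is in cod_alpha (alpha on its
   left) and in dom_beta (beta on its right). *)
Definition directly_above (a b : {set dart}) : bool :=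
  [exists e, ((e, true) \in a) && ((e, false) \in b)].

Definition above_rel (sigma : {perm dart}) (ext : {set dart})
  : rel {set dart} :=
  [rel a b | [&& a \in atomic_cells sigma ext, b \in atomic_cells sigma ext &
                 directly_above a b]].

End PlaneGraph.

(* Main.v *)
From HB Require Import structures.
From mathcomp Require Import all_boot all_order all_algebra.
From mathcomp Require Import fingroup perm ring lra zify.
Require Import Defs.

Set Implicit Arguments.
Unset Strict Implicit.
Unset Printing Implicit Defensive.


Section Basic.
Variables (V E : finType) (src tgt : E -> V) (sigma : {perm dart E}).
Local Notation D := (dart E).
Local Notation tail := (dtail src tgt).
Definition dhead (d : D) := tail (dflip d).

Lemma dflipK : involutive (@dflip E).
Proof. by case=> e b; rewrite /dflip /= negbK. Qed.

Lemma facep_inj : injective (facep sigma).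
Proof. move=> x y; rewrite /facep => /perm_inj; exact: (inv_inj dflipK). Qed.

Lemma face_sym : connect_sym (frel (facep sigma)).
Proof. exact: fconnect_sym facep_inj. Qed.

Lemma mem_face d : d \in face_of sigma d.
Proof. by rewrite inE connect0. Qed.

Lemma face_eq d d' : d' \in face_of sigma d -> face_of sigma d' = face_of sigma d.
Proof.
rewrite inE => H; apply/setP => z; rewrite !inE.
by rewrite (same_connect face_sym H).
Qed.

Lemma face_facep d : face_of sigma (facep sigma d) = face_of sigma d.
Proof. by apply: face_eq; rewrite inE fconnect1. Qed.

Lemma face_in d : face_of sigma d \in faces sigma.
Proof. by apply/imsetP; exists d. Qed.

Lemma faceP F d : F \in faces sigma -> d \in F -> F = face_of sigma d.
Proof. by case/imsetP=> d0 _ -> /face_eq ->. Qed.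

Lemma facepP F d : F \in faces sigma -> (facep sigma d \in F) = (d \in F).
Proof.
case/imsetP=> d0 _ ->; rewrite !inE.
apply/idP/idP => H.
  by rewrite (connect_trans H) // face_sym fconnect1.
by rewrite (connect_trans H) // fconnect1.
Qed.

Definition FT := {F : {set D} | F \in faces sigma}.
Definition fcT (d : D) : FT := exist _ (face_of sigma d) (face_in d).

Lemma fcT_facep d : fcT (facep sigma d) = fcT d.
Proof. by apply: val_inj; rewrite /= face_facep. Qed.

Lemma mem_fcT (F : FT) d : (d \in val F) = (fcT d == F).
Proof.
case: F => F HF /=; apply/idP/eqP => [H|/(congr1 val) /= <-]; last exact: mem_face.
by apply: val_inj; rewrite /= -(faceP HF H).
Qed.

Hypothesis rot : rotation_system src tgt sigma.

Lemma tail_sigma d : tail (sigma d) = tail d.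
Proof. by case: rot. Qed.

Lemma tail_facep d : tail (facep sigma d) = dhead d.
Proof. by rewrite /facep tail_sigma. Qed.

Lemma tail_iter n d : tail (iter n sigma d) = tail d.
Proof. by elim: n => //= n IH; rewrite tail_sigma IH. Qed.

Lemma tail_fconnect d d' : fconnect sigma d d' -> tail d' = tail d.
Proof. by move/iter_findex <-; rewrite tail_iter. Qed.

End Basic.

Import GRing.Theory Num.Theory.

Section LA.
Variables (V E : finType) (src tgt : E -> V) (sigma : {perm dart E}).
Local Notation D := (dart E).
Local Notation tail := (dtail src tgt).
Local Notation FT := (FT sigma).
Local Notation fcT := (fcT sigma).
Local Open Scope ring_scope.

Definition QV := {ffun V -> rat^o}.
Definition QE := {ffun E -> rat^o}.
Definition QF := {ffun FT -> rat^o}.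

Definition delta (x : QV) : QE := [ffun e => x (tgt e) - x (src e)].
Definition deltas (y : QF) : QE :=
  [ffun e => y (fcT (e, true)) - y (fcT (e, false))].
Definition dot (a b : QE) : rat := \sum_e (a e : rat) * b e.

Fact delta_lin : linear delta.
Proof. by move=> a x y; apply/ffunP=> e; rewrite !ffunE; rewrite /GRing.scale /=; ring. Qed.
Fact deltas_lin : linear deltas.
Proof. by move=> a x y; apply/ffunP=> e; rewrite !ffunE; rewrite /GRing.scale /=; ring. Qed.
HB.instance Definition _ := GRing.isLinear.Build rat QV QE _ delta delta_lin.
HB.instance Definition _ := GRing.isLinear.Build rat QF QE _ deltas deltas_lin.
Definition deltaL : 'Hom(QV, QE) := linfun delta.
Definition deltasL : 'Hom(QF, QE) := linfun deltas.

Lemma dimQV : \dim (fullv : {vspace QV}) = #|V|.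
Proof. by rewrite dimvf /dim /= muln1. Qed.
Lemma dimQE : \dim (fullv : {vspace QE}) = #|E|.
Proof. by rewrite dimvf /dim /= muln1. Qed.
Lemma dimQF : \dim (fullv : {vspace QF}) = #|faces sigma|.
Proof. by rewrite dimvf /dim /= muln1 card_sig. Qed.

Hypothesis rot : rotation_system src tgt sigma.

Lemma ortho x y : dot (delta x) (deltas y) = 0.
Proof.
pose G (d : D) : rat := (x (dhead src tgt d) - x (tail d)) * y (fcT d).
have -> : dot (delta x) (deltas y) = \sum_(d : D) G d.
  rewrite (eq_bigr (fun d : E * bool => G (d.1, d.2))); last by case.
  rewrite -(pair_bigA _ (fun e b => G (e, b))) /=; apply: eq_bigr => e _.
  rewrite big_bool /G /dhead /dtail /dflip /= !ffunE; ring.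
rewrite /G; under eq_bigr do rewrite mulrBl.
rewrite sumrB; apply/eqP; rewrite subr_eq0; apply/eqP.
rewrite [RHS](reindex_inj (@facep_inj _ sigma)) /=.
by apply: eq_bigr => d _; rewrite fcT_facep (tail_facep rot).
Qed.

Definition ones (T : finType) : {ffun T -> rat^o} := [ffun => 1].

Lemma const_line (T : finType) (f : {ffun T -> rat^o}) :
  (forall u v, f u = f v) -> f \in <[ones T]>%VS.
Proof.
move=> H; apply/vlineP; case: (pickP (fun _ : T => true)) => [v0 _|hV].
  exists (f v0); apply/ffunP => v; rewrite !ffunE (H v v0).
  by rewrite /GRing.scale /= mulr1.
by exists 0; apply/ffunP => v; have := hV v.
Qed.

Lemma dim_ker_le1 (T : finType) (U : {vspace {ffun T -> rat^o}}) :
  (forall f, f \in U -> forall u v, f u = f v) -> (\dim U <= 1)%N.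
Proof.
move=> H; apply: (@leq_trans (\dim <[ones T]>)); last by rewrite dim_vline leq_b1.
by apply: dimvS; apply/subvP => f /H; exact: const_line.
Qed.

Hypothesis conn : graph_connected src tgt.

Lemma delta_ker x : delta x = 0 -> forall u v, x u = x v.
Proof.
move=> H u v; have /connectP [p pth ->] := conn u v.
elim: p u pth => //= w p IH u /andP [adj pth]; rewrite -(IH w pth).
case/existsP: adj => e /orP [] /andP [/eqP <- /eqP <-];
  have := congr1 (fun f : QE => f e) H; rewrite !ffunE => /eqP; rewrite subr_eq0 => /eqP //.
Qed.

Lemma dim_limg_delta : (#|V| <= \dim (limg deltaL) + 1)%N.
Proof.
have := limg_ker_dim deltaL fullv; rewrite capfv dimQV => <-.
rewrite addnC leq_add2l; apply: dim_ker_le1 => x; rewrite memv_ker lfunE => /eqP.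
exact: delta_ker.
Qed.

Lemma deltas_ker y : deltas y = 0 -> forall d d', y (fcT d) = y (fcT d').
Proof.
move=> H.
pose g d := y (fcT d).
have gflip d : g (dflip d) = g d.
  case: d => e b; have := congr1 (fun f : QE => f e) H; rewrite !ffunE => /eqP.
  by rewrite subr_eq0 => /eqP; rewrite /g /dflip; case: b => /= ->.
have gsig a : g (sigma a) = g a.
  have -> : sigma a = facep sigma (dflip a) by rewrite /facep dflipK.
  by rewrite /g fcT_facep -/(g _) gflip.
have gfc a b : fconnect sigma a b -> g a = g b.
  apply: fconnect_invariant => z /=; by rewrite gsig eqxx.
have gtail a b : tail a = tail b -> g a = g b.
  by move=> Hab; apply: gfc; case: rot => _; apply.
have gpath p u : path (adjacent src tgt) u p -> forall a b, tail a = u ->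
    tail b = last u p -> g a = g b.
  elim: p u => [|w p IH] u /=; first by move=> _ a b ha hb; apply: gtail; rewrite ha hb.
  case/andP => adj pth a b ha hb.
  case/existsP: adj => e /orP [] /andP [/eqP hs /eqP ht].
    rewrite (gtail a (e, true)) /=; last by rewrite ha /dtail /= hs.
    rewrite -(gflip (e, true)); apply: (IH w pth) => //; by rewrite /dtail /=.
  rewrite (gtail a (e, false)) /=; last by rewrite ha /dtail /= ht.
  rewrite -(gflip (e, false)); apply: (IH w pth) => //; by rewrite /dtail /=.
move=> d d'; have /connectP [p pth hl] := conn (tail d) (tail d').
exact: (gpath p (tail d) pth).
Qed.

Lemma dim_limg_deltas : (#|faces sigma| <= \dim (limg deltasL) + 1)%N.
Proof.
have := limg_ker_dim deltasL fullv; rewrite capfv dimQF => <-.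
rewrite addnC leq_add2l; apply: dim_ker_le1 => y; rewrite memv_ker lfunE => /eqP H.
move=> F G.
have ex (K : FT) : exists d, K = fcT d.
  case: K => K HK; case/imsetP: (HK) => d0 _ HE; exists d0; exact: val_inj.
have [d ->] := ex F; have [d' ->] := ex G; exact: deltas_ker.
Qed.

Lemma dot_self_eq0 (z : QE) : dot z z = 0 -> z = 0.
Proof.
rewrite /dot => H; apply/ffunP => e; rewrite ffunE.
have H0 : forall i, xpredT i -> 0 <= (z i : rat) * z i.
  by move=> i _; rewrite -expr2 sqr_ge0.
have := @psumr_eq0P _ _ xpredT (fun e => (z e : rat) * z e) H0 H e isT.
by move/eqP; rewrite mulf_eq0 orbb; move/eqP.
Qed.

Lemma limg_disj : (limg deltaL :&: limg deltasL = 0)%VS.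
Proof.
apply/eqP; rewrite -subv0; apply/subvP => z; rewrite memv_cap memv0.
case/andP => /memv_imgP [x _ ->] /memv_imgP [y _ Hy].
rewrite lfunE /=; rewrite lfunE /= in Hy.
rewrite !lfunE /= in Hy.
by apply/eqP/dot_self_eq0; rewrite {2}Hy ortho.
Qed.

Hypothesis euler : planar_map V sigma.

Lemma limg_full : (limg deltaL + limg deltasL = fullv)%VS.
Proof.
apply/eqP; rewrite eqEdim subvf /= dimv_disjoint_sum ?limg_disj // dimQE.
have := dim_limg_delta; have := dim_limg_deltas; move: euler; rewrite /planar_map.
move: (\dim (limg deltaL)) (\dim (limg deltasL)) => a b.
move: #|V| #|E| #|faces sigma| => nv ne nf; lia.
Qed.

Lemma dotDl a b c : dot (a + b) c = dot a c + dot b c.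
Proof. by rewrite /dot -big_split; apply: eq_bigr => e _; rewrite ffunE mulrDl. Qed.

Lemma circ_exact (phi : QE) :
  (forall y, dot phi (deltas y) = 0) -> exists x, phi = delta x.
Proof.
move=> H.
have : phi \in (limg deltaL + limg deltasL)%VS by rewrite limg_full memvf.
case/memv_addP => a /memv_imgP [x _ ->] [b /memv_imgP [y _ ->] Hphi].
rewrite !lfunE /= in Hphi; exists x.
have := H y; rewrite Hphi dotDl ortho add0r => /dot_self_eq0 Hy.
by rewrite Hy addr0.
Qed.

Section Core.
Variable U : {set V}.
Definition EU := [set e | (src e \in U) || (tgt e \in U)].
Definition FU := [set F : FT | [exists d in val F, d.1 \in EU]].
Definition relR := [rel u v | [exists e, [&& src e == u, tgt e == v, u \notin U & v \notin U]]].
Variable r0 : V.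
Hypothesis r0R : r0 \notin U.
Hypothesis HR : forall r, r \notin U -> connect relR r0 r.
Variable F0 : FT.
Hypothesis F0U : F0 \in FU.

Definition unitF (F : FT) : QF := [ffun G => (G == F)%:R].
Definition CI := ({e : E | e \notin EU} + {F : FT | F \in FU :\ F0})%type.
Definition QC := {ffun CI -> rat^o}.
Definition Lam (phi : QE) : QC :=
  [ffun i => match i with inl e => phi (val e) | inr F => dot phi (deltas (unitF (val F))) end].
Definition QU := {ffun {v : V | v \in U} -> rat^o}.
Definition extU (z : QU) : QV := [ffun v => if insub v is Some u then z u else 0].
Definition Gam (z : QU) : QE := delta (extU z).

Lemma dotZDl a (p q c : QE) : dot (a *: p + q) c = a * dot p c + dot q c.
Proof.
rewrite /dot mulr_sumr -big_split; apply: eq_bigr => e _; rewrite !ffunE.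
by rewrite /GRing.scale /=; ring.
Qed.

Fact Lam_lin : linear Lam.
Proof.
move=> a p q; apply/ffunP=> i; rewrite !ffunE; case: i => [e|F] /=; rewrite ?ffunE //.
by rewrite dotZDl.
Qed.
Fact extU_lin : linear extU.
Proof.
move=> a p q; apply/ffunP=> v; rewrite !ffunE; case: insubP => [u _ _|_]; rewrite ?ffunE //.
by rewrite /GRing.scale /= mulr0 addr0.
Qed.
Fact Gam_lin : linear Gam.
Proof. by move=> a p q; rewrite /Gam extU_lin delta_lin. Qed.
HB.instance Definition _ := GRing.isLinear.Build rat QE QC _ Lam Lam_lin.
HB.instance Definition _ := GRing.isLinear.Build rat QU QE _ Gam Gam_lin.
Definition LamL : 'Hom(QE, QC) := linfun Lam.
Definition GamL : 'Hom(QU, QE) := linfun Gam.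

Lemma sum_delta (a : FT) (y : FT -> rat) : \sum_F y F * ((a == F)%:R : rat) = y a.
Proof.
rewrite (bigD1 a) //= eqxx mulr1 big1 ?addr0 // => F /negbTE.
by rewrite eq_sym => ->; rewrite mulr0.
Qed.

Lemma dot_expand (phi : QE) (y : QF) :
  dot phi (deltas y) = \sum_F y F * dot phi (deltas (unitF F)).
Proof.
rewrite /dot; under [RHS]eq_bigr do rewrite mulr_sumr.
rewrite [RHS]exchange_big /=; apply: eq_bigr => e _; rewrite !ffunE.
under eq_bigr do rewrite !ffunE.
rewrite (eq_bigr (fun F => (phi e : rat) * (y F * (fcT (e, true) == F)%:R - y F * (fcT (e, false) == F)%:R))); last by move=> F _; ring.
by rewrite -mulr_sumr sumrB !sum_delta.
Qed.

Lemma ker_sub : (lker LamL <= limg GamL)%VS.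
Proof.
apply/subvP => phi; rewrite memv_ker lfunE /= => /eqP H.
have hE e : e \notin EU -> phi e = 0.
  move=> he; have := congr1 (fun f : QC => f (inl (exist _ e he))) H.
  by rewrite !ffunE.
have hF F : F \in FU :\ F0 -> dot phi (deltas (unitF F)) = 0.
  move=> hf; have := congr1 (fun f : QC => f (inr (exist _ F hf))) H.
  by rewrite !ffunE.
have hN F : F \notin FU -> dot phi (deltas (unitF F)) = 0.
  move=> hf; rewrite /dot big1 // => e _; rewrite !ffunE.
  case: (boolP (e \in EU)) => he; last by rewrite hE // mul0r.
  suff [/negbTE -> /negbTE ->] : fcT (e, true) != F /\ fcT (e, false) != F by rewrite subr0 mulr0.
  by split; apply/negP => /eqP Hf; move/negP: hf; apply; rewrite inE; apply/existsP;
    [exists (e, true) | exists (e, false)]; rewrite he andbT mem_fcT Hf.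
have hAll F : dot phi (deltas (unitF F)) = 0.
  case: (boolP (F \in FU)) => hf; last exact: hN.
  case: (eqVneq F F0) => [->|hne]; last by apply: hF; rewrite in_setD1 hne hf.
  have Hs : \sum_G dot phi (deltas (unitF G)) = 0.
    have := dot_expand phi (ones FT).
    rewrite (eq_bigr (fun G => dot phi (deltas (unitF G)))) => [<-|G _]; last by rewrite ffunE mul1r.
    by rewrite /dot big1 // => e _; rewrite !ffunE subrr mulr0.
  move: Hs; rewrite (bigD1 F0) //= big1 ?addr0 // => G hG.
  case: (boolP (G \in FU)) => hg; last exact: hN.
  by apply: hF; rewrite in_setD1 hG hg.
have [x Hx] : exists x, phi = delta x.
  apply: circ_exact => y; rewrite dot_expand big1 // => F _; by rewrite hAll mulr0.
have xR r : r \notin U -> x r = x r0.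
  move=> hr; have /connectP [p pth ->] := HR hr.
  elim: p r0 r0R pth => //= w p IH u hu /andP [adj pth].
  case/existsP: adj => e /and4P [/eqP hs /eqP ht _ hw].
  rewrite (IH w hw pth); have : phi e = 0 by apply: hE; rewrite inE hs ht (negbTE hu) (negbTE hw).
  by rewrite Hx ffunE ht hs => /eqP; rewrite subr_eq0 => /eqP.
apply/memv_imgP; exists [ffun u => x (val u) - x r0]; first exact: memvf.
have hext v : extU [ffun u => x (val u) - x r0] v = x v - x r0.
  rewrite ffunE; case: insubP => [u _ <-|hv]; first by rewrite ffunE.
  by rewrite xR ?subrr.
rewrite lfunE /= Hx; apply/ffunP => e; rewrite /Gam. rewrite [in RHS]ffunE. rewrite !hext ffunE; ring.
Qed.

Lemma core_dim : (#|EU| + 1 <= #|U| + #|FU|)%N.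
Proof.
have h1 := limg_ker_dim LamL fullv; rewrite capfv dimQE in h1.
have h2 := limg_ker_dim GamL fullv; rewrite capfv in h2.
have h3 : (\dim (limg LamL) <= #|{: CI}|)%N.
  have := limg_ker_dim LamL fullv; move: (dimvf QC); rewrite /dim /= muln1 => <-.
  move=> _; exact: dimvS (subvf _).
have h4 : (\dim (limg GamL) <= #|U|)%N.
  have -> : #|U| = \dim (fullv : {vspace QU}) by rewrite dimvf /dim /= muln1 card_sig.
  rewrite -h2; exact: leq_addl.
have h5 := dimvS ker_sub.
have h6 : #|{: CI}| = (#|E| - #|EU| + (#|FU| - 1))%N.
  rewrite card_sum !card_sig; congr (_ + _)%N.
    rewrite -(cardC EU) addKn; apply: eq_card => e; by rewrite !inE.
  rewrite (cardsD1 F0 FU) F0U add1n subn1 /=; apply: eq_card => F; by rewrite !inE.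
have h7 : (#|EU| <= #|E|)%N by apply: max_card.
have h8 : (0 < #|FU|)%N by apply/card_gt0P; exists F0.
move: h1 h3 h4 h5 h6 h7 h8.
move: (\dim (lker LamL)) (\dim (limg LamL)) (\dim (limg GamL)) #|{: CI}| => a b c d.
move: #|EU| #|E| #|FU| #|U| => n1 n2 n3 n4; lia.
Qed.
End Core.
End LA.


Lemma sumb_card (T : finType) (P : pred T) : \sum_a (P a : nat) = #|P|.
Proof. rewrite -sum1_card [RHS]big_mkcond; apply: eq_bigr => a _. have -> : (a \in P) = P a by []. by case: (P a). Qed.

Lemma sumb_cards (T : finType) (A : {set T}) : \sum_a ((a \in A) : nat) = #|A|.
Proof. by rewrite -sum1_card [RHS]big_mkcond; apply: eq_bigr => a _. Qed.

Lemma fconnect_switch (T : finType) (f : T -> T) (p : pred T) x y :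
  fconnect f x y -> p x -> ~~ p y -> exists z, [/\ fconnect f x z, p z & ~~ p (f z)].
Proof.
move/iter_findex; move: (findex f x y) => n <-.
elim: n x => [|n IH] x /=; first by move=> ->.
move=> px; rewrite -iterS iterSr.
case: (boolP (p (f x))) => pfx; last by move=> _; exists x; rewrite connect0.
case/(IH _ pfx) => z [c pz npz]; exists z; split => //.
by apply: connect_trans c; rewrite fconnect1.
Qed.

Section Count.
Variables (V E : finType) (src tgt : E -> V) (sigma : {perm dart E}).
Local Notation D := (dart E).
Local Notation tail := (dtail src tgt).
Local Notation head := (dhead src tgt).
Local Notation FT := (FT sigma).
Local Notation fcT := (fcT sigma).
Hypothesis rot : rotation_system src tgt sigma.
Variable U : {set V}.
Local Notation EU := (EU src tgt U).
Local Notation FU := (FU src tgt sigma U).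
Definition Kc := [set e | (src e \in U) != (tgt e \in U)].
Definition fsU (F : {set D}) :=
  #|[set d in F | (head d \in U) && (d.2 != (facep sigma d).2)]|.
Definition kd (F : {set D}) := #|[set d in F | d.1 \in Kc]|.

Lemma sum_dart (f : D -> nat) : \sum_d f d = \sum_e (f (e, true) + f (e, false)).
Proof.
rewrite (eq_bigr (fun d : E * bool => f (d.1, d.2))); last by case.
by rewrite -(pair_bigA _ (fun e b => f (e, b))) /=; apply: eq_bigr => e _; rewrite big_bool.
Qed.

Lemma sum_faces (P : pred D) : \sum_(F : FT) #|[set d in val F | P d]| = #|P|.
Proof.
rewrite -sumb_card (partition_big fcT xpredT) //=. apply: eq_big => // F _.
rewrite -sumb_cards [RHS]big_mkcond /=; apply: eq_bigr => d _.
rewrite inE mem_fcT; by case: (fcT d == F); case: (P d).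
Qed.

Lemma sum_faces_FU (P : pred D) : (forall d, P d -> d.1 \in EU) ->
  \sum_(F in FU) #|[set d in val F | P d]| = #|P|.
Proof.
move=> HP; rewrite -sum_faces [RHS](bigID (mem FU)) /= [X in _ = _ + X]big1 ?addn0 //.
move=> F hF; apply/eqP; rewrite cards_eq0; apply/eqP/setP => d; rewrite !inE.
apply/negP => /andP [hd pd]; move: hF; rewrite inE; apply/negP/negPn/existsP.
by exists d; rewrite hd HP.
Qed.

Hypothesis H1 : forall u, u \in U -> (exists e, src e = u) /\ (exists e, tgt e = u).
Hypothesis H2 : forall F : FT, F \in FU -> (4 <= 2 * fsU (val F) + kd (val F))%N.

Definition sw (a : D) := a.2 != (sigma a).2.

Lemma vs_u u : u \in U -> (2 <= #|[pred a | (tail a == u) && sw a]|)%N.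
Proof.
case/H1 => [[e1 h1] [e2 h2]].
have t1 : tail (e1, true) = u by [].
have t2 : tail (e2, false) = u by [].
have c12 : fconnect sigma (e1, true) (e2, false) by case: rot => _; apply; rewrite t1 t2.
have c21 : fconnect sigma (e2, false) (e1, true) by case: rot => _; apply; rewrite t1 t2.
have [z1 [cz1 pz1 nz1]] := fconnect_switch (p := fun a : D => a.2) c12 isT isT.
have [z2 [cz2 pz2 nz2]] := fconnect_switch (p := fun a : D => ~~ a.2) c21 isT isT.
have tz1 : tail z1 = u by rewrite (tail_fconnect rot cz1).
have tz2 : tail z2 = u by rewrite (tail_fconnect rot cz2).
have neq : z1 != z2 by apply/eqP => E12; move: pz2; rewrite -E12 pz1.
apply: (@leq_trans #|[set z1; z2]|); first by rewrite cards2 neq.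
apply: subset_leq_card; apply/subsetP => a.
rewrite !inE => /orP [] /eqP ->; rewrite /sw ?tz1 ?tz2 eqxx /=.
  by move: pz1 nz1; case: (z1.2); case: ((sigma z1).2).
by move: pz2 nz2; case: (z2.2); case: ((sigma z2).2).
Qed.

Lemma count_main : (#|U| + #|FU| <= #|EU|)%N.
Proof.
set NU := #|[pred a : D | tail a \in U]|.
set vs := #|[pred a : D | (tail a \in U) && sw a]|.
set fs := #|[pred d : D | (head d \in U) && (d.2 != (facep sigma d).2)]|.
set K := #|Kc|.
have e1 : NU = (vs + #|[pred a : D | (tail a \in U) && ~~ sw a]|)%N.
  rewrite /NU /vs -!sumb_card -big_split /=; apply: eq_bigr => a _.
  by case: (tail a \in U); case: (sw a).
have e2 : #|[pred a : D | (tail a \in U) && ~~ sw a]| = fs.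
  rewrite /fs -!sumb_card (reindex_inj (inv_inj (@dflipK E))) /=.
  apply: eq_bigr => a _; rewrite /sw /facep /dhead; set s := (sigma (dflip a)).2.
  by rewrite {2}/dflip /=; case: (a.2); case: s.
have e3 : (2 * #|U| <= vs)%N.
  rewrite /vs -(sumb_card [pred a : D | (tail a \in U) && sw a]).
  have -> : \sum_a (((tail a \in U) && sw a) : nat) =
      \sum_(u in U) \sum_a (((tail a == u) && sw a) : nat).
    rewrite exchange_big /=; apply: eq_bigr => a _.
    case: (boolP (tail a \in U)) => ha /=.
      rewrite (bigD1 (tail a)) //= eqxx big1 ?addn0 // => u /andP [_ /negbTE].
      by rewrite eq_sym => ->.
    rewrite big1 // => u hu; case: (eqVneq (tail a) u) => // Hu.
    by move: ha; rewrite Hu hu.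
  rewrite mulnC -sum_nat_const; apply: leq_sum => u hu.
  by rewrite sumb_card; apply: vs_u.
have e4 : (4 * #|FU| <= 2 * fs + 2 * K)%N.
  have -> : (4 * #|FU| = \sum_(F in FU) 4)%N by rewrite sum_nat_const mulnC.
  have -> : fs = \sum_(F in FU) fsU (val F).
    rewrite /fs -sum_faces_FU; first by apply: eq_bigr.
    move=> d /andP [hd _]; rewrite inE; move: hd; rewrite /dhead /dtail /dflip /=.
    by case: (d.2) => /= ->; rewrite ?orbT.
  have -> : (2 * K = \sum_(F in FU) kd (val F))%N.
    rewrite /kd sum_faces_FU; last first.
      move=> d; rewrite !inE; by case: (src d.1 \in U); case: (tgt d.1 \in U).
    rewrite /K -sumb_cards -sumb_card sum_dart mul2n -addnn -big_split /=.
    by apply: eq_bigr => e _.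
  rewrite big_distrr /= -big_split /=.
  apply: leq_sum => F hF; exact: H2.
have e5 : (2 * #|EU| = NU + #|[pred d : D | (d.1 \in EU) && (tail d \notin U)]|)%N.
  rewrite /NU -sumb_cards -!sumb_card -big_split /= sum_dart mul2n -addnn -big_split /=.
  apply: eq_bigr => e _; rewrite !inE /dtail /=.
  by case: (src e \in U); case: (tgt e \in U).
have e6 : (K <= #|[pred d : D | (d.1 \in EU) && (tail d \notin U)]|)%N.
  rewrite /K -sumb_cards -sumb_card sum_dart; apply: leq_sum => e _; rewrite /= !inE /dtail /=.
  by case: (src e \in U); case: (tgt e \in U).
move: e1 e2 e3 e4 e5 e6.
move: NU vs fs K #|[pred a : D | (tail a \in U) && ~~ sw a]| #|[pred d : D | (d.1 \in EU) && (tail d \notin U)]|.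
move: #|U| #|FU| #|EU| => a b c n1 n2 n3 n4 n5 n6; lia.
Qed.
End Count.


Section Paths.
Variables (V E : finType) (src tgt : E -> V).
Definition lk := fun e f => tgt e == src f.
Definition touch (A : pred V) e := A (src e) || A (tgt e).

Lemma L1 (A : pred V) e0 p : path lk e0 p -> ~~ A (src e0) -> has (touch A) (e0 :: p) ->
  exists2 e, e \in e0 :: p & ~~ A (src e) && A (tgt e).
Proof.
elim: p e0 => [|e1 p IH] e0 /=.
  move=> _ hs; rewrite orbF /touch (negbTE hs) /= => ht.
  by exists e0; rewrite ?mem_head // hs ht.
case/andP => /eqP l01 pth hs.
case: (boolP (A (tgt e0))) => ht; first by move=> _; exists e0; rewrite ?mem_head // hs ht.
rewrite /touch (negbTE hs) (negbTE ht) /= => hh.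
have hs1 : ~~ A (src e1) by rewrite -l01.
have [e he h] := IH e1 pth hs1 hh.
by exists e => //; rewrite inE he orbT.
Qed.

Lemma L3 (A : pred V) e0 p : path lk e0 p -> ~~ A (tgt (last e0 p)) -> has (touch A) (e0 :: p) ->
  exists2 e, e \in e0 :: p & A (src e) && ~~ A (tgt e).
Proof.
elim: p e0 => [|e1 p IH] e0 /=.
  move=> _ ht; rewrite orbF /touch (negbTE ht) orbF => hs.
  by exists e0; rewrite ?mem_head // hs ht.
case/andP => /eqP l01 pth hl.
case: (boolP (A (src e0) && ~~ A (tgt e0))) => h0; first by move=> _; exists e0; rewrite ?mem_head.
move=> hh.
have hh' : has (touch A) (e1 :: p).
  move: hh; rewrite /= /touch; case/orP => // /orP [hs|ht].
    by move: h0; rewrite hs /= => /negbNE; rewrite l01 => ->.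
  by rewrite -l01 ht.
have [e he h] := IH e1 pth hl hh'.
by exists e => //; rewrite inE he orbT.
Qed.

Lemma path_src_ne_last e0 p : path lk e0 p -> uniq (src e0 :: map tgt (e0 :: p)) ->
  forall e, e \in e0 :: p -> src e != tgt (last e0 p).
Proof.
elim: p e0 => [|e1 p IH] e0 /=.
  by move=> _; rewrite inE andbT => h e; rewrite inE => /eqP ->.
case/andP => /eqP l01 pth /andP [hn hu] e; rewrite inE => /orP [/eqP ->|he].
  apply/eqP => Hc; move: hn; rewrite Hc; apply/negP/negPn.
  rewrite -last_map in_cons; apply/orP; right; exact: mem_last.
apply: IH => //; by rewrite -l01.
Qed.

Lemma dpath_src_ne s t p : dpath src tgt s t p -> forall e, e \in p -> src e != t.
Proof.
case: p => [|e0 p] //= /and4P [/eqP hs pth /eqP ht hu] e he.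
rewrite -ht; apply: (path_src_ne_last pth) => //; by rewrite hs.
Qed.

Lemma dpath_tgt_ne s t p : dpath src tgt s t p -> forall e, e \in p -> tgt e != s.
Proof.
case: p => [|e0 p] //= /and4P [_ _ _ /andP [hn _]] e he.
apply/eqP => Hc; move: hn; rewrite -Hc; apply/negP/negPn.
exact: (map_f tgt he).
Qed.
End Paths.

Section FaceBound.
Variables (V E : finType) (src tgt : E -> V) (sigma : {perm dart E}).
Local Notation D := (dart E).
Local Notation tail := (dtail src tgt).
Local Notation head := (dhead src tgt).
Hypothesis rot : rotation_system src tgt sigma.
Variable U : {set V}.
Local Notation UA := (fun v : V => v \in U).

Lemma face_bound (F : {set D}) : F \in faces sigma -> anchorable_interior src tgt F ->
  (exists2 d, d \in F & d.1 \in EU src tgt U) ->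
  ((forall e, src e \notin U -> tgt e \notin U) \/ (forall e, src e \in U -> tgt e \in U)) ->
  (4 <= 2 * fsU src tgt sigma U F + kd src tgt U F)%N.
Proof.
move=> HF [sF [tF [[Q [hQ mQ]] [P [hP mP]] _ _]]] [d0 hd0 hu0] dir.
have mL e : ((e, true) \in F) = (e \in P) by rewrite -mP inE.
have mR e : ((e, false) \in F) = (e \in Q) by rewrite -mQ inE.
case: P hP mP mL => [|eP0 P'] // hP _ mL.
case: Q hQ mQ mR => [|eQ0 Q'] // hQ _ mR.
have hP' := hP; have hQ' := hQ.
move: hP' hQ' => /= /and4P [/eqP sP pP /eqP tP _] /and4P [/eqP sQ pQ /eqP tQ _].
set dT : D := (last eP0 P', true).
set dS : D := (eQ0, false).
have dTF : dT \in F by rewrite mL mem_last.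
have dSF : dS \in F by rewrite mR mem_head.
have hdT : head dT = tF by [].
have hdS : head dS = sF by [].
have sdT : (facep sigma dT).2 = false.
  case Ef: (facep sigma dT) => [e' b]; case: b Ef => // Ef.
  have : (e', true) \in F by rewrite -Ef facepP.
  rewrite mL => he'; have := dpath_src_ne hP he'.
  have <- : tail (facep sigma dT) = tF by rewrite (tail_facep rot).
  by rewrite Ef /= eqxx.
have sdS : (facep sigma dS).2 = true.
  case Ef: (facep sigma dS) => [e' b]; case: b Ef => // Ef.
  have : (e', false) \in F by rewrite -Ef facepP.
  rewrite mR => he'; have := dpath_tgt_ne hQ he'.
  have <- : tail (facep sigma dS) = sF by rewrite (tail_facep rot).
  by rewrite Ef /= eqxx.
have fsge : ((tF \in U) + (sF \in U) <= fsU src tgt sigma U F)%N.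
  have inT : (dT \in [set d in F | (head d \in U) && (d.2 != (facep sigma d).2)]) = (tF \in U).
    by rewrite !inE dTF hdT sdT /= andbT.
  have inS : (dS \in [set d in F | (head d \in U) && (d.2 != (facep sigma d).2)]) = (sF \in U).
    by rewrite !inE dSF hdS sdS /= andbT.
  rewrite /fsU; case: (boolP (tF \in U)) => ht; case: (boolP (sF \in U)) => hs //=.
  - apply: (@leq_trans #|[set dT; dS]|); first by rewrite cards2 /dT /dS xpair_eqE andbF.
    apply: subset_leq_card; apply/subsetP => d; rewrite !inE => /orP [] /eqP ->.
      by move: inT; rewrite ht !inE.
    by move: inS; rewrite hs !inE.
  - by apply/card_gt0P; exists dT; rewrite inT.
  - by apply/card_gt0P; exists dS; rewrite inS.
have kdge eK eK' : eK \in eP0 :: P' -> eK \in Kc src tgt U -> eK' \in eQ0 :: Q' ->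
    eK' \in Kc src tgt U -> (2 <= kd src tgt U F)%N.
  move=> h1 h2 h3 h4; apply: (@leq_trans #|[set (eK, true); (eK', false)]|); first by rewrite cards2 xpair_eqE andbF.
  apply: subset_leq_card; apply/subsetP => d; rewrite !inE => /orP [] /eqP -> /=.
    by rewrite mL h1; move: h2; rewrite inE.
  by rewrite mR h3; move: h4; rewrite inE.
have Kin e : ((src e \in U) != (tgt e \in U)) -> e \in Kc src tgt U by rewrite inE.
have touchPQ : has (touch src tgt UA) (eP0 :: P') || has (touch src tgt UA) (eQ0 :: Q').
  case: d0 hd0 hu0 => e [] hd he.
    by apply/orP; left; apply/hasP; exists e; rewrite -?mL //; move: he; rewrite inE.
  by apply/orP; right; apply/hasP; exists e; rewrite -?mR //; move: he; rewrite inE.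
case: dir => [dirA|dirB].
- have sFU : sF \in U.
    apply/negPn/negP => hs; case/orP: touchPQ => ht.
      have xx1 : ~~ (src eP0 \in U) by rewrite sP.
      have [e _ /andP [h1 h2]] := L1 (A := UA) pP xx1 ht.
      by move: h2; rewrite (negbTE (dirA e h1)).
    have xx2 : ~~ (src eQ0 \in U) by rewrite sQ.
    have [e _ /andP [h1 h2]] := L1 (A := UA) pQ xx2 ht.
    by move: h2; rewrite (negbTE (dirA e h1)).
  case: (boolP (tF \in U)) => htF.
    by move: fsge; rewrite htF sFU; move: (fsU src tgt sigma U F) (kd src tgt U F) => n1 n2 /= h; rewrite -[4]/(2*2)%N; apply: leq_trans (leq_addr n2 _); by rewrite leq_mul2l h.
  have tP1 : has (touch src tgt UA) (eP0 :: P') by rewrite /= /touch sP sFU.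
  have tQ1 : has (touch src tgt UA) (eQ0 :: Q') by rewrite /= /touch sQ sFU.
  have xx3 : ~~ (tgt (last eP0 P') \in U) by rewrite tP.
  have [e1 h1 /andP [a1 b1]] := L3 (A := UA) pP xx3 tP1.
  have xx4 : ~~ (tgt (last eQ0 Q') \in U) by rewrite tQ.
  have [e2 h2 /andP [a2 b2]] := L3 (A := UA) pQ xx4 tQ1.
  have := kdge e1 e2 h1 (Kin _ _) h2 (Kin _ _); rewrite a1 (negbTE b1) a2 (negbTE b2) => /(_ isT isT).
  by move: fsge; rewrite sFU (negbTE htF); move: (fsU src tgt sigma U F) (kd src tgt U F) => n1 n2 /= hA hB; rewrite -[4]/(2*1 + 2)%N; apply: leq_add => //; by rewrite leq_mul2l hA.
- have tFU : tF \in U.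
    apply/negPn/negP => ht; case/orP: touchPQ => hh.
      have xx5 : ~~ (tgt (last eP0 P') \in U) by rewrite tP.
      have [e _ /andP [h1 h2]] := L3 (A := UA) pP xx5 hh.
      by move: h2; rewrite (dirB e h1).
    have xx6 : ~~ (tgt (last eQ0 Q') \in U) by rewrite tQ.
    have [e _ /andP [h1 h2]] := L3 (A := UA) pQ xx6 hh.
    by move: h2; rewrite (dirB e h1).
  case: (boolP (sF \in U)) => hsF.
    by move: fsge; rewrite tFU hsF; move: (fsU src tgt sigma U F) (kd src tgt U F) => n1 n2 /= h; rewrite -[4]/(2*2)%N; apply: leq_trans (leq_addr n2 _); by rewrite leq_mul2l h.
  have tP1 : has (touch src tgt UA) (eP0 :: P').
    by apply/hasP; exists (last eP0 P'); rewrite ?mem_last // /touch tP tFU orbT.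
  have tQ1 : has (touch src tgt UA) (eQ0 :: Q').
    by apply/hasP; exists (last eQ0 Q'); rewrite ?mem_last // /touch tQ tFU orbT.
  have xx7 : ~~ (src eP0 \in U) by rewrite sP.
  have [e1 h1 /andP [a1 b1]] := L1 (A := UA) pP xx7 tP1.
  have xx8 : ~~ (src eQ0 \in U) by rewrite sQ.
  have [e2 h2 /andP [a2 b2]] := L1 (A := UA) pQ xx8 tQ1.
  have := kdge e1 e2 h1 (Kin _ _) h2 (Kin _ _); rewrite (negbTE a1) b1 (negbTE a2) b2 => /(_ isT isT).
  by move: fsge; rewrite tFU (negbTE hsF); move: (fsU src tgt sigma U F) (kd src tgt U F) => n1 n2 /= hA hB; rewrite -[4]/(2*1 + 2)%N; apply: leq_add => //; by rewrite leq_mul2l hA.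
Qed.
End FaceBound.


Import Order.TTheory GRing.Theory Num.Theory.

Section MainSec.
Variables (V E : finType) (src tgt : E -> V) (sigma : {perm dart E}) (ext : {set dart E}).
Local Notation D := (dart E).
Hypothesis rot : rotation_system src tgt sigma.
Hypothesis conn : graph_connected src tgt.
Hypothesis euler : planar_map V sigma.
Hypothesis extF : ext \in faces sigma.
Hypothesis hInt : forall F, F \in atomic_cells sigma ext -> anchorable_interior src tgt F.

Lemma core_contra (U : {set V}) (r0 : V) :
  U != set0 -> r0 \notin U ->
  (forall r, r \notin U -> connect (relR src tgt U) r0 r) ->
  (forall d, d \in ext -> (src d.1 \notin U) && (tgt d.1 \notin U)) ->
  (forall u, u \in U -> (exists e, src e = u) /\ (exists e, tgt e = u)) ->
  ((forall e, src e \notin U -> tgt e \notin U) \/ (forall e, src e \in U -> tgt e \in U)) ->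
  False.
Proof.
move=> /set0Pn [u hu] r0R HR hext H1 dir.
have [[e1 he1] _] := H1 u hu.
pose F0 := fcT sigma (e1, true).
have F0U : F0 \in FU src tgt sigma U.
  rewrite inE; apply/existsP; exists (e1, true); rewrite mem_face /= inE he1 hu //.
have h1 := core_dim rot conn euler r0R HR F0U.
have H2 : forall F : FT sigma, F \in FU src tgt sigma U ->
    (4 <= 2 * fsU src tgt sigma U (val F) + kd src tgt U (val F))%N.
  move=> F hF; move: hF; rewrite inE => /existsP [d /andP [hd hdU]].
  apply: face_bound => //; first exact: valP.
    apply: hInt; rewrite /atomic_cells in_setD1 (valP F) andbT.
    apply/eqP => Hx; move: hd; rewrite Hx => /hext.
    by move: hdU; rewrite inE; case: (src d.1 \in U); case: (tgt d.1 \in U).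
  by exists d.
have h2 := count_main rot H1 H2.
move: h1 h2; move: #|EU src tgt U| #|U| #|FU src tgt sigma U| => a b c; lia.
Qed.

Variables sP tP : V.
Hypothesis hext : anchorable_exterior src tgt ext sP tP.
Hypothesis hs : forall v, (forall e, tgt e != v) <-> v = sP.
Hypothesis ht : forall v, (forall e, src e != v) <-> v = tP.

Lemma path_inv (Q : pred V) e0 p : path (lk src tgt) e0 p -> Q (src e0) ->
  (forall e, e \in e0 :: p -> Q (src e) -> Q (tgt e)) ->
  forall e, e \in e0 :: p -> Q (src e) && Q (tgt e).
Proof.
elim: p e0 => [|e1 p IH] e0 /=.
  move=> _ hq hi e; rewrite inE => /eqP ->; rewrite hq hi ?mem_head //.
case/andP => /eqP l01 pth hq hi e; rewrite inE => /orP [/eqP ->|he].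
  by rewrite hq hi ?mem_head.
have q1 : Q (src e1) by rewrite -l01; apply: hi; rewrite ?mem_head.
apply: (IH e1 pth q1) => // e' he'; apply: hi; by rewrite inE he' orbT.
Qed.

Lemma ext_inv (Q : pred V) : Q sP ->
  (forall e, ((e, true) \in ext) || ((e, false) \in ext) -> Q (src e) -> Q (tgt e)) ->
  Q tP /\ forall d, d \in ext -> Q (src d.1) && Q (tgt d.1).
Proof.
move=> hq hi; case: hext => [[PL [hPL mPL]] [PR [hPR mPR]]].
have inv P : dpath src tgt sP tP P -> (forall e, e \in P -> ((e, true) \in ext) || ((e, false) \in ext)) ->
    Q tP /\ forall e, e \in P -> Q (src e) && Q (tgt e).
  case: P => [|e0 P] //= /and4P [/eqP s0 pth /eqP t0 _] hin.
  have q0 : Q (src e0) by rewrite s0.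
  have H := path_inv pth q0 (fun e he => hi e (hin e he)).
  split; last exact: H.
  by rewrite -t0; case/andP: (H _ (mem_last e0 P)).
have iL : forall e, e \in PL -> ((e, true) \in ext) || ((e, false) \in ext).
  by move=> e he; rewrite -mPL inE in he; rewrite he.
have iR : forall e, e \in PR -> ((e, true) \in ext) || ((e, false) \in ext).
  by move=> e he; rewrite -mPR inE in he; rewrite he orbT.
have [hL1 hL2] := inv PL hPL iL.
have [_ hR2] := inv PR hPR iR.
split => // [[e []]] hd /=.
  by apply: hL2; rewrite -mPL inE.
by apply: hR2; rewrite -mPR inE.
Qed.

Lemma in_out u : u != sP -> u != tP -> (exists e, src e = u) /\ (exists e, tgt e = u).
Proof.
move=> h1 h2; split.
  case: (boolP [exists e, src e == u]) => [/existsP [e /eqP]|/existsPn hn]; first by exists e.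
  by case/eqP: h2; apply/ht => e; apply: hn.
case: (boolP [exists e, tgt e == u]) => [/existsP [e /eqP]|/existsPn hn]; first by exists e.
by case/eqP: h1; apply/hs => e; apply: hn.
Qed.

Definition step := [rel u v | [exists e, (src e == u) && (tgt e == v)]].

Lemma all_reach v : connect step sP v.
Proof.
apply/negPn/negP => hv.
pose U := [set w | ~~ connect step sP w].
have reach_step e : connect step sP (src e) -> connect step sP (tgt e).
  move=> h; apply: connect_trans h (connect1 _); apply/existsP; exists e; by rewrite !eqxx.
have [htP hex] := ext_inv (Q := connect step sP) (connect0 _ _) (fun e _ => reach_step e).
apply: (@core_contra U sP).
- by apply/set0Pn; exists v; rewrite inE.
- by rewrite inE negbK connect0.
- move=> r; rewrite inE negbK => /connectP [p pth ->].
  have gen : forall q y, path step y q -> connect step sP y -> connect (relR src tgt U) y (last y q).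
    elim=> [|z q IH] y /=; first by rewrite connect0.
    case/andP => sy pq cy.
    have cz : connect step sP z by apply: connect_trans cy (connect1 sy).
    apply: connect_trans (IH z pq cz); apply: connect1.
    case/existsP: sy => e /andP [/eqP h1 /eqP h2]; apply/existsP; exists e.
    by rewrite h1 h2 !eqxx !inE !negbK cy cz.
  by apply: gen => //; exact: connect0.
- by move=> d /hex /andP [h1 h2]; rewrite !inE !negbK h1 h2.
- move=> u; rewrite inE => hu; apply: in_out.
    by apply/eqP => Hu; move: hu; rewrite Hu connect0.
  by apply/eqP => Hu; move: hu; rewrite Hu htP.
- by left => e; rewrite !inE !negbK; apply: reach_step.
Qed.

Local Open Scope ring_scope.

Definition unitE (e : E) : QE E := [ffun e' => (e' == e)%:R].
Definition pe (c c' : {set D}) : QE E :=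
  if [pick e | ((e, true) \in c) && ((e, false) \in c')] is Some e then unitE e else 0.
Definition phiW (x : {set D}) (s : seq {set D}) : QE E :=
  \sum_(pr <- zip (x :: s) s) pe pr.1 pr.2.
Definition yh (y : QF sigma) (c : {set D}) : rat :=
  if insub c is Some F then y F else 0.

Lemma pe_prop c c' : above_rel sigma ext c c' ->
  exists e, [/\ pe c c' = unitE e, (e, true) \in c & (e, false) \in c'].
Proof.
rewrite /pe; case: pickP => [e /andP [h1 h2]|hn]; first by exists e.
by case/and3P => _ _ /existsP [e he]; move: (hn e); rewrite he.
Qed.

Lemma zip_rel x s : path (above_rel sigma ext) x s ->
  forall pr, pr \in zip (x :: s) s -> above_rel sigma ext pr.1 pr.2.
Proof.
elim: s x => [|c s IH] x //= /andP [h p] pr; rewrite inE => /orP [/eqP -> //|].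
exact: IH.
Qed.

Lemma yh_fc y c d : c \in faces sigma -> d \in c -> yh y c = y (fcT sigma d).
Proof.
move=> hc hd; rewrite /yh (insubT (fun F => F \in faces sigma) hc) /=.
by congr (y _); apply: val_inj; rewrite /= (faceP hc hd).
Qed.

Lemma dot_unit e (z : QE E) : dot (unitE e) z = z e.
Proof.
rewrite /dot (bigD1 e) //= ffunE eqxx mul1r big1 ?addr0 // => e' /negbTE ne.
by rewrite ffunE ne mul0r.
Qed.

Lemma atomic_faces c : c \in atomic_cells sigma ext -> c \in faces sigma.
Proof. by rewrite /atomic_cells in_setD1 => /andP []. Qed.

Lemma phiW_dot x s y : path (above_rel sigma ext) x s ->
  dot (phiW x s) (deltas y) = yh y x - yh y (last x s).
Proof.
elim: s x => [|c s IH] x /=.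
  move=> _; rewrite /phiW big_nil subrr /dot big1 // => e _; by rewrite ffunE mul0r.
case/andP => h p; rewrite /phiW /= big_cons /= -/(phiW c s) dotDl (IH c p).
have [e [-> h1 h2]] := pe_prop h.
case/and3P: h => ha hc _.
rewrite dot_unit ffunE (yh_fc y (atomic_faces ha) h1) (yh_fc y (atomic_faces hc) h2).
ring.
Qed.

Lemma antisym a b : a \in atomic_cells sigma ext -> b \in atomic_cells sigma ext ->
  connect (above_rel sigma ext) a b -> connect (above_rel sigma ext) b a -> a = b.
Proof.
move=> ha hb /connectP [p1 pt1 l1] /connectP [p2 pt2 l2].
apply/eqP/negPn/negP => nab.
case: p1 pt1 l1 => [|c1 p1] pt1 l1; first by move: nab; rewrite l1 eqxx.
set s := c1 :: p1 ++ p2.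
have ps : path (above_rel sigma ext) a s by rewrite /s -cat_cons cat_path pt1 -l1 pt2.
have ls : last a s = a by rewrite /s -cat_cons last_cat -l1 -l2.
have [x hx] : exists x, phiW a s = delta src tgt x.
  apply: (circ_exact rot conn euler) => y; by rewrite phiW_dot // ls subrr.
have hdx e : (x (tgt e) : rat) - x (src e) = phiW a s e by rewrite hx ffunE.
have pe_ge0 c c' e : 0 <= (pe c c' e : rat).
  rewrite /pe; case: pickP => [e' _|_]; rewrite !ffunE //=; exact: ler0n.
have hpos e : 0 <= (phiW a s e : rat).
  rewrite /phiW sum_ffunE; apply: sumr_ge0 => pr _; exact: pe_ge0.
have hext0 e : ((e, true) \in ext) || ((e, false) \in ext) -> phiW a s e = 0.
  move=> he; rewrite /phiW sum_ffunE big_seq big1 // => pr hpr.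
  have hab := zip_rel ps hpr.
  have [e' [-> h1 h2]] := pe_prop hab.
  rewrite ffunE; case: (eqVneq e e') => [Hee|ne] //.
  case/and3P: hab => h3 h4 _; exfalso; subst e'.
  case/orP: he => he.
    have : pr.1 = ext by rewrite (faceP (atomic_faces h3) h1) (faceP extF he).
    by move=> Hx; move: h3; rewrite Hx /atomic_cells in_setD1 eqxx.
  have : pr.2 = ext by rewrite (faceP (atomic_faces h4) h2) (faceP extF he).
  by move=> Hx; move: h4; rewrite Hx /atomic_cells in_setD1 eqxx.
have [e0 he0] : exists e0, 1 <= (phiW a s e0 : rat).
  have [e [Hpe _ _]] := pe_prop (let: (conj h _) := andP pt1 in h).
  exists e; rewrite /phiW /s /= big_cons /= ffunE Hpe ffunE eqxx.
  rewrite -[X in X <= _]addr0 lerD2l sum_ffunE.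
  by apply: sumr_ge0 => pr _; exact: pe_ge0.
pose c := (x sP : rat).
have hge v : c <= x v.
  have /connectP [p pth ->] := all_reach v.
  have h0 : c <= x sP := lexx _.
  elim: p sP pth h0 => [|w p IH] u /=; first by move=> _ h.
  case/andP => st pth hu.
  apply: IH pth _; apply: le_trans hu _.
  case/existsP: st => e /andP [/eqP h1 /eqP h2].
  by rewrite -h1 -h2 -subr_ge0 hdx.
pose T := [set v | c < x v].
have hinv : forall e, ((e, true) \in ext) || ((e, false) \in ext) ->
    (x (src e) : rat) == c -> (x (tgt e) : rat) == c.
  by move=> e he hq; rewrite -(eqP hq) -subr_eq0 hdx hext0.
have [htP hexT] := ext_inv (Q := fun v => (x v : rat) == c) (eqxx _) hinv.
apply: (@core_contra T sP).
- apply/set0Pn; exists (tgt e0); rewrite inE.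
  have := hdx e0; move: (hge (src e0)) he0; lra.
- by rewrite inE ltxx.
- move=> r; rewrite inE -leNgt => hr.
  have /connectP [p pth hl] := all_reach r.
  have gen : forall q y, path step y q -> (x (last y q) : rat) <= c ->
      connect (relR src tgt T) y (last y q) /\ (x y : rat) <= c.
    elim=> [|z q IH] y /=; first by move=> _ hy; split; rewrite ?connect0.
    case/andP => sy pq hlast.
    have [cz hz] := IH z pq hlast.
    case/existsP: (sy) => e /andP [/eqP h1 /eqP h2].
    have hyz : (x y : rat) <= x z by rewrite -h1 -h2 -subr_ge0 hdx.
    have hy : (x y : rat) <= c by apply: le_trans hz.
    split => //; apply: connect_trans cz; apply: connect1; apply/existsP; exists e.
    by rewrite h1 h2 !eqxx !inE -!leNgt hy hz.
  by rewrite hl; case: (gen p sP pth); rewrite -hl.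
- move=> d /hexT /andP [/eqP h1 /eqP h2]; by rewrite !inE h1 h2 ltxx.
- move=> u; rewrite inE => hu; apply: in_out.
    by apply/eqP => Hu; move: hu; rewrite Hu ltxx.
  by apply/eqP => Hu; move: hu; rewrite Hu (eqP htP) ltxx.
- right => e; rewrite !inE => hsrc.
  apply: lt_le_trans hsrc _; by rewrite -subr_ge0 hdx.
Qed.

End MainSec.


Theorem mainTheorem19 (V E : finType) (src tgt : E -> V)
    (sigma : {perm dart E}) (ext : {set dart E}) :
  pasting_scheme src tgt sigma ext ->
  let R := connect (above_rel sigma ext) in
  [/\ (forall a, a \in atomic_cells sigma ext -> R a a),
      (forall a b c, a \in atomic_cells sigma ext ->
         b \in atomic_cells sigma ext -> c \in atomic_cells sigma ext ->
         R a b -> R b c -> R a c) &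
      (forall a b, a \in atomic_cells sigma ext ->
         b \in atomic_cells sigma ext -> R a b -> R b a -> a = b)].
Proof.
move=> [[rot conn euler extF] [sP [tP [hext hInt hs ht]]]] R.
split.
- by move=> a _; exact: connect0.
- by move=> a b c _ _ _; exact: connect_trans.
- by move=> a b ha hb; exact: (antisym rot conn euler extF hInt hext hs ht).
Qed.
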